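(* Let $n\ge1$, $\omega\ge1$, and let $\mathcal{R}_\omega(\mathcal{C}^*_{n,A})$ be the set of regions of $\mathcal{C}^*_{n,A}$ of level $\omega$. For $\Omega\in\mathcal{R}_\omega(\mathcal{C}^*_{n,A})$, the graph $G_1(\Omega)$ has exactly $\omega$ connected components, which can be uniquely listed as $D_1,\dots,D_\omega$ so that $x_j-x_i>a_1$ whenever $i\in D_u$, $j\in D_v$, $u<v$ (for any $\bm x\in\Omega$); let $\Omega_j$ be the region of $\mathcal{C}^*_{D_j,A}$ containing the restriction $(x_i)_{i\in D_j}$. Then $\phi_\omega(\Omega)=(\Omega_1,\dots,\Omega_\omega)$ is independent of $\bm x\in\Omega$, each $\Omega_j$ has level 1, and \[\phi_\omega:\mathcal{R}_\omega(\mathcal{C}^*_{n,A})\longrightarrow\bigsqcup_{(D_1,\dots,D_\omega)}\mathcal{R}_1(\mathcal{C}^*_{D_1,A})\times\cdots\times\mathcal{R}_1(\mathcal{C}^*_{D_\omega,A})\] is a bijection, where the union is over all ordered set partitions $(D_1,\dots,D_\omega)$ of $[n]$ into $\omega$ nonempty blocks.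
   Context: Let $A=\{a_1,\dots,a_m\}$ with $a_1>\dots>a_m>0$. For a finite nonempty set $S$, $\mathcal{C}^*_{S,A}$ is the arrangement in $\mathbb{R}^S$ of hyperplanes $x_i-x_j=a_k$ ($i\ne j\in S$, $1\le k\le m$), and $\mathcal{C}^*_{n,A}=\mathcal{C}^*_{[n],A}$; for $|S|=1$ it is empty with unique region $\mathbb{R}^S$ of level 1. Regions are connected components of the complement; $\mathcal{R}_1(\cdot)$ denotes the set of regions of level 1. The level of $X\subseteq\mathbb{R}^S$ is the smallest integer $\ell\ge0$ such that there are a linear subspace $W$ of dimension $\ell$ and $r>0$ with $X\subseteq\{\bm x:\min_{\bm y\in W}\|\bm x-\bm y\|\le r\}$. $G_1(\Omega)$ is the graph on $[n]$ with $\{i,j\}$ an edge iff $|x_i-x_j|<a_1$ for $\bm x\in\Omega$. *)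

(* Defs.v *)
(* R : realType, points of R^T are
   functions T -> R with the (product = Euclidean, T finite) topology. *)
From HB Require Import structures.
From mathcomp Require Import all_boot all_order all_algebra.
From mathcomp Require Import boolp classical_sets reals topology normedtype.
Set Implicit Arguments. Unset Strict Implicit. Unset Printing Implicit Defensive.
Import Order.TTheory GRing.Theory Num.Theory.
Import numFieldNormedType.Exports.
Local Open Scope ring_scope.

(* The set A = {a_1 > ... > a_m > 0} is given as the strictly decreasing
   nonempty list A = [:: a_1; ...; a_m]; a_1 = head 0 A. *)
Definition valid_A (R : realType) (A : seq R) : Prop :=
  [/\ A != [::], sorted (fun x y => y < x) A & all (fun a => 0 < a) A].

Definition arr_compl (R : realType) (T : finType) (A : seq R) : set (T -> R) :=
  fun x => forall i j : T, i != j -> forall a, a \in A -> x i - x j != a.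

Definition is_region (R : realType) (T : finType) (A : seq R) (O : set (T -> R))
  : Prop :=
  exists2 x, arr_compl A x & O = @connected_component {ptws T -> R} (arr_compl A) x.

Definition eucl_norm (R : realType) (T : finType) (x : T -> R) : R :=
  Num.sqrt (\sum_(t : T) x t ^+ 2).

(* X lies within distance r of some linear subspace W of dimension l, where W
   is the span of l linearly independent vectors v_1..v_l
   (min_{y in W} |x - y| is attained, so "<= r" means some y in W is r-close) *)
Definition level_le (R : realType) (T : finType) (X : set (T -> R)) (l : nat)
  : Prop :=
  exists v : 'I_l -> T -> R,
    (forall c : 'I_l -> R,
        (forall t, \sum_(k < l) c k * v k t = 0) -> forall k, c k = 0) /\
    exists2 r : R, 0 < r &
      forall x, X x -> exists c : 'I_l -> R,
        eucl_norm (fun t => x t - \sum_(k < l) c k * v k t) <= r.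

Definition has_level (R : realType) (T : finType) (X : set (T -> R)) (l : nat)
  : Prop :=
  level_le X l /\ forall l', level_le X l' -> (l <= l')%N.

Definition G1 (R : realType) (n : nat) (A : seq R) (O : set ('I_n -> R))
  : rel 'I_n :=
  fun i j => `[< i != j /\ forall x, O x -> `|x i - x j| < head 0 A >].

Definition ordered_set_partition (n w : nat) (D : 'I_w -> {set 'I_n}) : Prop :=
  [/\ forall u, D u != finset.set0,
      forall u v, u != v -> [disjoint D u & D v]
    & forall i, exists u, i \in D u].

Definition ordered_components (R : realType) (n : nat) (A : seq R)
  (O : set ('I_n -> R)) (w : nat) (D : 'I_w -> {set 'I_n}) : Prop :=
  [/\ ordered_set_partition D,
      (forall i j, connect (G1 A O) i j <-> exists u, (i \in D u) && (j \in D u))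
    & forall (u v : 'I_w) i j x, O x -> (u < v)%N -> i \in D u -> j \in D v ->
        head 0 A < x j - x i].

Definition sub_idx (n : nat) (D : {set 'I_n}) : finType := {i : 'I_n | i \in D}.

Definition restr (R : realType) (n : nat) (D : {set 'I_n}) (x : 'I_n -> R)
  : sub_idx D -> R := fun k => x (val k).

Definition phi_rel (R : realType) (n : nat) (A : seq R) (O : set ('I_n -> R))
  (w : nat) (D : 'I_w -> {set 'I_n}) (P : forall u : 'I_w, set (sub_idx (D u) -> R))
  : Prop :=
  ordered_components A O D /\
  forall x, O x -> forall u, is_region A (P u) /\ P u (@restr R n (D u) x).
Arguments phi_rel {R n} A O {w} D P.

(* Main.v *)
Require Import Defs.
From HB Require Import structures.
From mathcomp Require Import all_boot all_order all_algebra.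
From mathcomp Require Import boolp classical_sets reals topology normedtype.
From mathcomp Require Import ring lra.
Import Order.TTheory GRing.Theory Num.Theory.
Import numFieldNormedType.Exports.

Module MTop.
Local Open Scope classical_set_scope.
Local Open Scope ring_scope.

Section Top.
Variables (R : realType) (T : finType) (A : seq R).

Definition cellset (x : T -> R) : set (T -> R) := fun y =>
  arr_compl A y /\ forall i j, i != j -> forall a, a \in A ->
    (y i - y j < a) = (x i - x j < a).

Lemma gamma_cont (x y : T -> R) :
  continuous (fun t : R => ((fun k => (1 - t) * x k + t * y k) : {ptws T -> R})).
Proof.
move=> t; apply/cvg_sup.
move=> k; move: t; apply/(@continuousP _ (initial_topology (@^~ k))) => B [C oC E].
rewrite -E.
have -> : (fun t : R => ((fun k => (1 - t) * x k + t * y k) : {ptws T -> R})) @^-1`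
   ((@^~ k) @^-1` C) = (fun t : R => (1 - t) * x k + t * y k) @^-1` C by [].
apply: open_comp => // s _.
have h1 : (fun r : R => 1 - r) @ s --> (1 - s).
  by apply: cvgB; [exact: cvg_cst | exact: cvg_id].

have h2 : (fun r : R => (1 - r) * x k) @ s --> (1 - s) * x k  by apply: cvgMr_tmp.
have h3 : (fun r : R => r * y k) @ s --> s * y k  by apply: cvgMr_tmp; exact: cvg_id.
have h4 := cvgD h2 h3.
exact: h4.
Qed.

Lemma diff_cont (i j : T) :
  continuous (fun z : {ptws T -> R} => z i - z j).
Proof.
move=> z.
have h1 : (fun y : {ptws T -> R} => y i) @ z --> z i :=
  (@proj_continuous T (fun _ => R) i z).
have h2 : (fun y : {ptws T -> R} => y j) @ z --> z j :=
  (@proj_continuous T (fun _ => R) j z).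
have h3 := cvgB h1 h2.
exact: h3.
Qed.


Lemma comp_sub_cell (x : T -> R) :
  connected_component (arr_compl A : set {ptws T -> R}) x `<=` cellset x.
Proof.
move=> y [C [Cx CA Cc] Cy]; split; first exact: CA.
move=> i j ij a aA.
pose g := fun z : {ptws T -> R} => z i - z j.
have gc : connected (g @` C).
  apply: connected_continuous_connected Cc _.
  exact/continuous_subspaceT/diff_cont.
have Hint := (iffLR (connected_intervalP _) gc).
have key : forall z, C z -> g z != a by move=> z /CA; apply.
have Hiv : forall p q, C p -> C q -> g p < a -> ~ (a < g q).
  move=> p q Cp Cq gpa agq.
  have : (g @` C) a.
    apply: (Hint (g p) (g q)); [exact: imageP | exact: imageP |].
    by rewrite (ltW gpa) (ltW agq).
  by case=> z Cz gza; move: (key z Cz); rewrite gza eqxx.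
have ny := key y Cy; have nx := key x Cx.
rewrite -/(g y) -/(g x).
case: (ltrgtP (g y) a) => hy; case: (ltrgtP (g x) a) => hx //;
  first [ by case: (Hiv y x Cy Cx hy hx) | by case: (Hiv x y Cx Cy hx hy)
        | by move: nx; rewrite hx eqxx | by move: ny; rewrite hy eqxx ].
Qed.

Lemma cell_sub_comp (x : T -> R) : arr_compl A x ->
  cellset x `<=` connected_component (arr_compl A : set {ptws T -> R}) x.
Proof.
move=> xc y [yc ycell].
pose gam := fun t : R => ((fun k => (1 - t) * x k + t * y k) : {ptws T -> R}).
exists (gam @` `[0, 1]); last first.
  exists 1; first by rewrite /= in_itv /= lexx ler01.
  by apply/funext => k; rewrite /gam subrr mul0r add0r mul1r.
split.
- exists 0; first by rewrite /= in_itv /= lexx ler01.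
  by apply/funext => k; rewrite /gam subr0 mul0r addr0 mul1r.
- move=> z [t]; rewrite /= in_itv /= => /andP[t0 t1] <- i j ij a aA.
  have := ycell i j ij a aA; have := xc i j ij a aA; have := yc i j ij a aA.
  rewrite /gam.
  set dx := x i - x j; set dy := y i - y j => nya nxa e.
  have -> : (1 - t) * x i + t * y i - ((1 - t) * x j + t * y j) =
     (1 - t) * dx + t * dy by rewrite /dx /dy; ring.
  case: (ltrgtP dx a) => hx; last by move: nxa; rewrite hx eqxx.
  + have hy : dy < a by rewrite e.
    apply/negP => /eqP h.
    have : (1 - t) * dx + t * dy < a.
      have h1 : (1 - t) * dx <= (1 - t) * a by rewrite ler_wpM2l ?subr_ge0 // ltW.
      have h2 : t * dy <= t * a by rewrite ler_wpM2l // ltW.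
      case: (ltrgtP t 0) => ht; first by move: t0; rewrite leNgt ht.
      * have h3 : t * dy < t * a by rewrite ltr_pM2l.
        have : (1 - t) * dx + t * dy < (1 - t) * a + t * a by apply: ler_ltD.
        by rewrite -mulrDl subrK mul1r.
      * rewrite ht mul0r addr0 subr0 mul1r in h *; by [].
    by rewrite h ltxx.
  + have hy : a < dy.
      have : ~~ (dy < a) by rewrite e -leNgt ltW.
      rewrite -leNgt le_eqVlt => /orP[/eqP hh|//].
      by move: nya; rewrite -hh eqxx.
    apply/negP => /eqP h.
    have : a < (1 - t) * dx + t * dy.
      have h1 : (1 - t) * a <= (1 - t) * dx by rewrite ler_wpM2l ?subr_ge0 // ltW.
      case: (ltrgtP t 0) => ht; first by move: t0; rewrite leNgt ht.
      * have h3 : t * a < t * dy by rewrite ltr_pM2l.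
        have : (1 - t) * a + t * a < (1 - t) * dx + t * dy by apply: ler_ltD.
        by rewrite -mulrDl subrK mul1r.
      * rewrite ht mul0r addr0 subr0 mul1r in h *; by [].
    by rewrite h ltxx.
- apply: connected_continuous_connected; first exact: segment_connected.
  exact/continuous_subspaceT/gamma_cont.
Qed.

Lemma region_cellP (O : set (T -> R)) :
  is_region A O <-> exists2 x, arr_compl A x & O = cellset x.
Proof.
split.
- case=> x xc ->; exists x => //; apply/seteqP; split.
  + exact: comp_sub_cell.
  + exact: cell_sub_comp.
- case=> x xc ->; exists x => //; apply/seteqP; split.
  + exact: cell_sub_comp.
  + exact: comp_sub_cell.
Qed.

End Top.
Arguments cellset {R T} A x.
Arguments region_cellP {R T A O}.

End MTop.
Import MTop.

Module MGen.
Local Open Scope classical_set_scope.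
Local Open Scope ring_scope.

Section Gen.
Variables (R : realType) (A : seq R).
Hypothesis hA : valid_A A.
Local Notation a1 := (head 0 A).

Lemma a1A : a1 \in A.
Proof. by case: hA; case: A => // a s _ _ _; rewrite inE eqxx. Qed.

Lemma posA a : a \in A -> 0 < a.
Proof. by case: hA => _ _ /allP; apply. Qed.

Lemma leA a : a \in A -> a <= a1.
Proof.
case: hA; case: A => // b s _ /= hs _.
rewrite inE => /orP[/eqP -> //|as_].
have tr : transitive (fun x y : R => y < x).
  by move=> ? ? ? h1 h2; exact: lt_trans h2 h1.
have := order_path_min tr hs.
by move/allP/(_ a as_) => /ltW.
Qed.

Lemma a1pos : 0 < a1.
Proof. exact: posA a1A. Qed.

Variable T : finType.

Definition G1g (O : set (T -> R)) : rel T :=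
  fun i j => `[< i != j /\ forall x, O x -> `|x i - x j| < head 0 A >].

Lemma cell_refl (x : T -> R) : arr_compl A x -> cellset A x x.
Proof. by move=> xc; split. Qed.

Lemma cell_eq (x y : T -> R) : cellset A x y -> cellset A y = cellset A x.
Proof.
move=> [yc ycell]; apply/funext => z; apply/propext; split.
- by case=> zc zcell; split => // i j ij a aA; rewrite zcell // ycell.
- by case=> zc zcell; split => // i j ij a aA; rewrite zcell // ycell.
Qed.

Lemma cell_gt (x y : T -> R) i j a : cellset A x y -> i != j -> a \in A ->
  a < x j - x i -> a < y j - y i.
Proof.
move=> [yc ycell] ij aA h.
have ji : j != i by rewrite eq_sym.
have e := ycell j i ji a aA.
have : ~~ (y j - y i < a) by rewrite e -leNgt ltW.
rewrite -leNgt le_eqVlt => /orP[/eqP hh|//].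
by move: (yc j i ji a aA); rewrite -hh eqxx.
Qed.

Lemma G1_cell (x : T -> R) i j : arr_compl A x ->
  G1g (cellset A x) i j = (i != j) && (`|x i - x j| < a1).
Proof.
move=> xc; apply/asboolP/andP.
- by case=> ij h; split => //; apply: h; exact: cell_refl.
- case=> ij h; split => // y [yc ycell].
  have ji : j != i by rewrite eq_sym.
  move: h; rewrite !ltr_norml => /andP[h1 h2]; apply/andP; split.
  + by rewrite ltrNl opprB (ycell j i ji _ a1A) -opprB -ltrNl.
  + by rewrite (ycell i j ij _ a1A).
Qed.

Definition eucl (x : T -> R) := eucl_norm x.

Lemma coord_le_eucl (q : T -> R) t : `|q t| <= eucl_norm q.
Proof.
rewrite /eucl_norm -sqrtr_sqr; apply: ler_wsqrtr.
rewrite (bigD1 t) //= lerDl; apply: sumr_ge0 => s _; exact: sqr_ge0.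
Qed.

Lemma eucl_le_sum (q : T -> R) : eucl_norm q <= \sum_t `|q t|.
Proof.
set S := \sum_t `|q t|.
have S0 : 0 <= S by apply: sumr_ge0 => s _.
have hS : forall t, `|q t| <= S.
  move=> t; rewrite /S (bigD1 t) //= lerDl; apply: sumr_ge0 => s _ //.
rewrite /eucl_norm -(ger0_norm S0) -sqrtr_sqr; apply: ler_wsqrtr.
apply: (@le_trans _ _ (\sum_t `|q t| * S)).
  apply: ler_sum => t _; rewrite -real_normK ?num_real // expr2.
  by apply: ler_wpM2l => //.
by rewrite -mulr_suml expr2.
Qed.

Lemma dot_bound (q z : T -> R) :
  `|\sum_t q t * z t| <= (\sum_t `|z t|) * eucl_norm q.
Proof.
apply: (le_trans (ler_norm_sum _ _ _)).
rewrite mulr_suml; apply: ler_sum => t _.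
by rewrite normrM mulrC; apply: ler_wpM2l => //; exact: coord_le_eucl.
Qed.

Lemma ray_in_span (O : set (T -> R)) l (v : 'I_l -> T -> R) (r : R)
  (cov : forall x, O x -> exists c : 'I_l -> R,
        eucl_norm (fun t => x t - \sum_(k < l) c k * v k t) <= r)
  (x h z : T -> R) :
  (forall s, 0 <= s -> O (fun t => x t + s * h t)) ->
  (forall k, \sum_t v k t * z t = 0) ->
  \sum_t h t * z t = 0.
Proof.
move=> ray vz; apply/eqP/negPn/negP => dn0.
set d := \sum_t h t * z t in dn0.
set Z := \sum_t `|z t|.
set X := \sum_t x t * z t.
have Z0 : 0 <= Z by apply: sumr_ge0.
have r0 : 0 <= r.
  have [c hc] := cov _ (ray 0 (lexx 0)); apply: le_trans hc.
  rewrite /eucl_norm; exact: sqrtr_ge0.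
have nd0 : 0 < `|d| by rewrite normr_gt0.
set s := (`|X| + Z * r + 1) / `|d|.
have s0 : 0 <= s by rewrite divr_ge0 // addr_ge0 // addr_ge0 // mulr_ge0.
have [c hc] := cov _ (ray s s0).
set q := fun t => x t + s * h t - \sum_(k < l) c k * v k t.
have e : \sum_t q t * z t = X + s * d.
  rewrite /q.
  have -> : \sum_t (x t + s * h t - \sum_(k < l) c k * v k t) * z t =
    \sum_t (x t * z t + s * (h t * z t)) - \sum_t \sum_(k < l) c k * (v k t * z t).
    rewrite -sumrB; apply: eq_bigr => t _.
    rewrite mulrBl mulrDl mulr_suml mulrA; congr (_ + _ - _).
    by apply: eq_bigr => k _; rewrite mulrA.
  have -> : \sum_t \sum_(k < l) c k * (v k t * z t) = 0.
    rewrite exchange_big /=; apply: big1 => k _.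
    by rewrite -mulr_sumr vz mulr0.
  by rewrite subr0 big_split /= -mulr_sumr.
have := dot_bound q z; rewrite e -/Z => hb.
have hb2 : `|X + s * d| <= Z * r.
  apply: le_trans hb _; apply: ler_wpM2l => //.
have hsd : `|s * d| = `|X| + Z * r + 1.
  by rewrite normrM (ger0_norm s0) /s divfK // gt_eqF.
have h2 : `|s * d| - `|X| <= `|X + s * d| by rewrite [X + _]addrC; exact: lerB_normD.
rewrite hsd in h2.
have : `|X| + Z * r + 1 - `|X| <= Z * r by apply: le_trans h2 hb2.
move=> hh; lra.
Qed.


Arguments ray_in_span {O l v r} cov {x h z}.

Lemma sum_enum_val (F : T -> R) : \sum_(j < #|T|) F (enum_val j) = \sum_t F t.
Proof.
rewrite (reindex (@enum_rank T)) /=; last by apply: onW_bij; exact: enum_rank_bij.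
by apply: eq_bigr => t _; rewrite enum_rankK.
Qed.

Lemma sum_pick (F : T -> R) c : \sum_t F t * (t == c)%:R = F c.
Proof.
rewrite (bigD1 c) //= eqxx mulr1 big1 ?addr0 //.
by move=> t /negbTE ->; rewrite mulr0.
Qed.

Lemma level_lower (O : set (T -> R)) (x : T -> R) k (f : T -> 'I_k)
  (surj : forall u, exists i, f i = u)
  (ray : forall U : pred 'I_k, (forall u v : 'I_k, (u < v)%N -> U u -> U v) ->
      forall s, 0 <= s -> O (fun t => x t + s * (U (f t))%:R)) :
  forall l, level_le O l -> (k <= l)%N.
Proof.
move=> l [v [_ [r r0 cov]]].
pose b (u : 'I_k) t : R := (f t == u)%:R.
have hb : forall u z, (forall kk, \sum_t v kk t * z t = 0) ->
    \sum_t b u t * z t = 0.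
  move=> u z vz.
  have e1 := ray_in_span cov (ray (fun w => (u <= w)%N)
     (fun a b h1 h2 => leq_trans h2 (ltnW h1))) vz.
  have e2 := ray_in_span cov (ray (fun w => (u < w)%N)
     (fun a b h1 h2 => ltn_trans h2 h1)) vz.
  have -> : \sum_t b u t * z t =
     \sum_t ((u <= f t)%N%:R * z t) - \sum_t ((u < f t)%N%:R * z t).
    rewrite -sumrB; apply: eq_bigr => t _; rewrite -mulrBl /b.
    rewrite leq_eqVlt; case: (ltngtP u (f t)) => h /=.
    - rewrite (_ : (f t == u) = false) ?subrr //.
      by apply/eqP => e; move: h; rewrite e ltnn.
    - rewrite (_ : (f t == u) = false) ?subrr //.
      by apply/eqP => e; move: h; rewrite e ltnn.
    - by rewrite (val_inj h) eqxx subr0.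
  by rewrite e1 e2 subrr.
pose N := #|T|.
pose V : 'M[R]_(l, N) := \matrix_(kk, j) v kk (enum_val j).
pose Bm : 'M[R]_(k, N) := \matrix_(u, j) b u (enum_val j).
have sub : (Bm <= V)%MS.
  rewrite submxE; apply/eqP/matrixP => u j'; rewrite !mxE.
  set K := cokermx V.
  pose z : T -> R := fun t => K (enum_rank t) j'.
  have vz : forall kk, \sum_t v kk t * z t = 0.
    move=> kk; transitivity ((V *m K) kk j'); last by rewrite mulmx_coker mxE.
    rewrite -(sum_enum_val (fun t => v kk t * z t)) mxE.
    apply: eq_big => // j _; rewrite /z enum_valK; congr (_ * _); by rewrite /V mxE.
  transitivity (\sum_t b u t * z t); last exact: hb u z vz.
  rewrite -(sum_enum_val (fun t => b u t * z t)).
  apply: eq_big => // j _; rewrite /z enum_valK; congr (_ * _); by rewrite /Bm mxE.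
have rk : (\rank Bm <= l)%N := leq_trans (mxrankS sub) (rank_leq_row V).
have exs : forall u, exists i, f i == u by move=> u; case: (surj u) => i <-; exists i.
pose rep u := xchoose (exs u).
have rf : row_free Bm.
  apply/row_freeP.
  exists (\matrix_(j, u) ((enum_val j == rep u)%:R : R)).
  apply/matrixP => u u'; rewrite !mxE.
  rewrite (eq_bigr (fun j => b u (enum_val j) * (enum_val j == rep u')%:R));
    last by move=> j _; rewrite !mxE.
  rewrite (sum_enum_val (fun t => b u t * (t == rep u')%:R)) sum_pick.
  by rewrite /b (eqP (xchooseP (exs u'))) eq_sym.
by move: rf; rewrite /row_free => /eqP <-.
Qed.

Lemma level_upper (O : set (T -> R)) k (f : T -> 'I_k)
  (surj : forall u, exists i, f i = u) (M : R) (M0 : 0 <= M)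
  (bd : forall y, O y -> forall i j, f i = f j -> `|y i - y j| <= M) :
  level_le O k.
Proof.
have exs : forall u, exists i, f i == u by move=> u; case: (surj u) => i <-; exists i.
pose rep u := xchoose (exs u).
have frep : forall u, f (rep u) = u by move=> u; exact: (eqP (xchooseP (exs u))).
exists (fun u t => (f t == u)%:R); split.
  move=> c hc u; have := hc (rep u).
  rewrite (bigD1 u) //= frep eqxx mulr1 big1 ?addr0 //.
  by move=> u' hu; rewrite eq_sym (negbTE hu) mulr0.
exists (#|T|%:R * M + 1).
  by apply: ltr_wpDl; [apply: mulr_ge0 | exact: ltr01].
move=> y Oy; exists (fun u => y (rep u)).
apply: le_trans (eucl_le_sum _) _.
apply: (@le_trans _ _ (\sum_(t : T) M)); last first.
  by rewrite sumr_const -[M *+ _]mulr_natl; apply: ler_wpDr; [exact: ler01 | exact: lexx].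
apply: ler_sum => t _.
rewrite (bigD1 (f t)) //= eqxx mulr1 big1 ?addr0.
  by apply: bd => //; rewrite frep.
by move=> u hu; rewrite eq_sym (negbTE hu) mulr0.
Qed.

Lemma has_level_uniq (O : set (T -> R)) a b :
  has_level O a -> has_level O b -> a = b.
Proof.
move=> [ha ma] [hb mb]; apply/eqP; rewrite eqn_leq.
by rewrite (ma _ hb) (mb _ ha).
Qed.

End Gen.
Arguments a1A {R A} hA.
Arguments posA {R A} hA {a}.
Arguments leA {R A} hA {a}.
Arguments a1pos {R A} hA.
Arguments G1g {R} A {T} O.
Arguments cell_refl {R A T x}.
Arguments cell_eq {R A T x y}.
Arguments cell_gt {R A T x y i j a}.
Arguments G1_cell {R A} hA {T x} i j.
Arguments level_lower {R T O x k f}.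
Arguments level_upper {R T O k f}.
Arguments has_level_uniq {R T O a b}.

End MGen.
Import MGen.

Module MComb.
Local Open Scope classical_set_scope.
Local Open Scope ring_scope.

Section Comb.
Variables (R : realType) (A : seq R).
Hypothesis hA : valid_A A.
Local Notation a1 := (head 0 A).
Variable T : finType.

Definition RF (O : set (T -> R)) k (f : T -> 'I_k) : Prop :=
  [/\ forall u, exists i, f i = u,
      forall i j, connect (G1g A O) i j <-> f i = f j
    & forall i j, (f i < f j)%N -> forall y, O y -> a1 < y j - y i].
Arguments RF O {k} f.

Lemma ord_unique k (f g : T -> 'I_k) :
  (forall u, exists i, f i = u) -> (forall u, exists i, g i = u) ->
  (forall i j, (f i < f j)%N -> (g i < g j)%N) ->
  (forall i j, (g i < g j)%N -> (f i < f j)%N) -> f = g.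
Proof.
move=> sf sg fg gf.
suff H : forall m i, nat_of_ord (f i) = m -> nat_of_ord (g i) = m.
  by apply/funext => i; apply: val_inj; symmetry; apply: H.
elim/ltn_ind => m IH i fim.
case: (ltngtP (g i) m) => h //.
- have [j fj] := sf (g i).
  have fjm : (f j < m)%N by rewrite fj.
  have gj := IH _ fjm j erefl.
  have : (g j < g i)%N by apply: fg; rewrite fj fim.
  by rewrite gj fj ltnn.
- have [j gj] := sg (Ordinal (ltn_trans h (ltn_ord (g i)))).
  have : (f j < f i)%N by apply: gf; rewrite gj.
  rewrite fim => fjm.
  have := IH _ fjm j erefl.
  by move: gj => /(congr1 val) /= ->; move: fjm => /[swap] <-; rewrite ltnn.
Qed.

Lemma RF_uniq (O : set (T -> R)) x (Ox : O x) k (f g : T -> 'I_k) :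
  RF O f -> RF O g -> f = g.
Proof.
have a10 := a1pos hA.
have H : forall (f g : T -> 'I_k), RF O f -> RF O g ->
    forall i j, (f i < f j)%N -> (g i < g j)%N.
  move=> f1 g1 [s1 c1 o1] [s2 c2 o2] i j h.
  have nc : ~ connect (G1g A O) i j.
    by move/c1 => e; move: h; rewrite e ltnn.
  have ne : g1 i != g1 j by apply/eqP => /c2.
  case: (ltngtP (g1 i) (g1 j)) => // h2.
  - have := o1 _ _ h _ Ox; have := o2 _ _ h2 _ Ox; lra.
  - by move: ne; rewrite (val_inj h2) eqxx.
move=> hf hg; apply: ord_unique.
- by case: hf.
- by case: hg.
- exact: H.
- exact: H.
Qed.

Lemma cone (x : T -> R) k (f : T -> 'I_k)
  (ord : forall i j, (f i < f j)%N -> forall y, cellset A x y -> a1 < y j - y i)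
  (U : pred 'I_k) (Uup : forall u v : 'I_k, (u < v)%N -> U u -> U v)
  y (Oy : cellset A x y) s (s0 : 0 <= s) :
  cellset A x (fun t => y t + s * (U (f t))%:R).
Proof.
have a10 := a1pos hA.
set y' := fun t => y t + s * (U (f t))%:R.
have key : forall i j, i != j ->
   [\/ y' i - y' j = y i - y j, (a1 < y i - y j /\ a1 < y' i - y' j) |
       (y i - y j < - a1 /\ y' i - y' j < - a1)].
  move=> i j ij; rewrite /y'.
  case hi: (U (f i)); case hj: (U (f j)).
  - by apply: Or31; rewrite mulr1; ring.
  - apply: Or32.
    have lt : (f j < f i)%N.
      case: (ltngtP (f i) (f j)) => // h.
      + by move: hj; rewrite (Uup _ _ h hi).
      + by move: hj; rewrite -(val_inj h) hi.
    have := ord _ _ lt _ Oy; rewrite mulr1 mulr0 => h; split => //; lra.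
  - apply: Or33.
    have lt : (f i < f j)%N.
      case: (ltngtP (f i) (f j)) => // h.
      + by move: hi; rewrite (Uup _ _ h hj).
      + by move: hi; rewrite (val_inj h) hj.
    have := ord _ _ lt _ Oy; rewrite mulr1 mulr0 => h; split; lra.
  - by apply: Or31; rewrite mulr0; ring.
case: Oy => yc ycell; split.
- move=> i j ij a aA; have a0 := posA hA aA; have aa1 := leA hA aA.
  case: (key i j ij) => [->|[_ h]|[_ h]]; first exact: yc.
  + by rewrite gt_eqF //; apply: le_lt_trans h.
  + by rewrite lt_eqF //; apply: (lt_trans h); lra.
- move=> i j ij a aA; have a0 := posA hA aA; have aa1 := leA hA aA.
  rewrite -ycell //.
  case: (key i j ij) => [->|[h1 h2]|[h1 h2]] //.
  + by rewrite !ltNge !ltW //; apply: le_lt_trans aa1 _.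
  + have e1 : y' i - y' j < a by lra.
    have e2 : y i - y j < a by lra.
    by rewrite e1 e2.
Qed.

Lemma path_bound (O : set (T -> R)) y (Oy : O y) (p : seq T) t :
  path (G1g A O) t p -> `|y t - y (last t p)| <= (size p)%:R * a1.
Proof.
elim: p t => [|s p IH] t /=; first by rewrite subrr normr0 mul0r.
move=> /andP[/asboolP [_ e] pth].
have h1 := e _ Oy; have h2 := IH _ pth.
rewrite -(subrK (y s) (y t)) -addrA.
apply: (le_trans (ler_normD _ _)).
rewrite -addn1 natrD mulrDl mul1r [_ * a1 + a1]addrC.
by apply: lerD; [exact: ltW | exact: h2].
Qed.

Lemma conn_bound (O : set (T -> R)) i j : connect (G1g A O) i j ->
  forall y, O y -> `|y i - y j| <= #|T|%:R * a1.
Proof.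
move=> /connectP [p pth ->] y Oy.
case/shortenP: pth => p' pth' uq _.
apply: (le_trans (path_bound _ _ Oy _ _ pth')).
apply: ler_wpM2r; first exact: ltW (a1pos hA).
rewrite ler_nat.
have := max_card (mem (i :: p')); rewrite (card_uniqP uq) /=.
by move=> h; apply: leq_trans (leqnSn _) h.
Qed.

Lemma cell_level (x : T -> R) k (f : T -> 'I_k) :
  arr_compl A x -> RF (cellset A x) f -> has_level (cellset A x) k.
Proof.
move=> xc [sf cf ofx]; split.
- apply: (level_upper sf (#|T|%:R * a1)).
    by apply: mulr_ge0 => //; exact: ltW (a1pos hA).
  move=> y Oy i j e; exact: (conn_bound _ _ _ (proj2 (cf i j) e) _ Oy).
- apply: (level_lower (x := x) sf) => U Uup s s0.
  by apply: cone => //; exact: cell_refl.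
Qed.

End Comb.
Arguments RF {R} A {T} O {k} f.
Arguments cell_level {R A} hA {T x k f}.
Arguments RF_uniq {R A} hA {T O x} Ox {k f g}.

End MComb.
Import MComb.

Module MExist.
Local Open Scope ring_scope.

Section Exist.
Variables (R : realType) (A : seq R).
Hypothesis hA : valid_A A.
Local Notation a1 := (head 0 A).
Variable T : finType.
Variable x : T -> R.
Hypothesis xc : arr_compl A x.

Local Notation O := (cellset A x).
Local Notation E := (G1g A O).

Let hE i j : E i j = (i != j) && (`|x i - x j| < a1).
Proof. exact: G1_cell. Qed.

Let symE : connect_sym E.
Proof.
apply: sym_connect_sym => i j; rewrite !hE eq_sym distrC //.
Qed.

Let a10 : 0 < a1. Proof. exact: a1pos hA. Qed.

Let c1 i j : ~~ connect E i j -> x i < x j -> a1 < x j - x i.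
Proof.
move=> nc lt.
have ij : i != j by apply: contraNneq nc => ->; exact: connect0.
have nE : ~~ E i j by apply: contra nc => h; exact: connect1.
move: nE; rewrite hE ij /= -leNgt distrC ger0_norm; last by rewrite subr_ge0 ltW.
rewrite le_eqVlt => /orP[/eqP h|//].
have := xc j i _ _ (a1A hA); rewrite -h eqxx => /(_ _)/negP; rewrite eq_sym.
by move=> /(_ ij).
Qed.
Arguments c1 {i j}.


Let noteq i j : ~~ connect E i j -> x i != x j.
Proof.
move=> nc; have ij : i != j by apply: contraNneq nc => ->; exact: connect0.
apply/eqP => e; move/negP: nc; apply; apply: connect1.
by rewrite hE ij e subrr normr0 a10.
Qed.
Arguments noteq {i j}.


Let L1 t t' j : connect E t t' -> ~~ connect E t j -> x t < x j -> x t' < x j.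
Proof.
case/connectP => p pth ->; elim: p t pth => [|s p IH] t //= /andP[ets pth] nc lt.
apply: IH => //.
  by apply: contra nc => h; apply: connect_trans h; exact: connect1.
have ncs : ~~ connect E s j.
  by apply: contra nc => h; apply: connect_trans h; exact: connect1.
have ns := noteq ncs.
case: (ltrgtP (x s) (x j)) => // h; last by move: ns; rewrite h eqxx.
have h1 := c1 nc lt.
have h2 : a1 < x s - x j.
  apply: c1 => //; by rewrite symE.
move: ets; rewrite hE => /andP[_]; rewrite ltr_norml => /andP[h3 h4].
lra.
Qed.
Arguments L1 {t t' j}.


Let L2 t t' j : connect E t t' -> ~~ connect E t j -> x j < x t -> x j < x t'.
Proof.
move=> ctt nc lt.
have nc' : ~~ connect E t' j.
  by apply: contra nc => h; apply: connect_trans h.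
case: (ltrgtP (x j) (x t')) => // h; last by move: (noteq nc'); rewrite h eqxx.
have ct't : connect E t' t by rewrite symE.
have := L1 ct't nc' h; rewrite ltNge => /negP; case; exact: ltW.
Qed.
Arguments L2 {t t' j}.


Let B i j := ~~ connect E i j && (x i < x j).

Let B_l i i' j : connect E i i' -> B i j -> B i' j.
Proof.
move=> cii /andP[nc lt]; apply/andP; split.
  by apply: contra nc => h; apply: connect_trans h.
exact: L1 lt.
Qed.
Arguments B_l {i i' j}.


Let B_r i j j' : connect E j j' -> B i j -> B i j'.
Proof.
move=> cjj /andP[nc lt].
have nc' : ~~ connect E i j'.
  apply: contra nc => h; apply: connect_trans h _; by rewrite symE.
apply/andP; split => //.
have ncj : ~~ connect E j i by rewrite symE.
exact: L2 lt.
Qed.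
Arguments B_r {i j j'}.


Let B_total i j : ~~ connect E i j -> B i j || B j i.
Proof.
move=> nc; have ne := noteq nc.
have nc' : ~~ connect E j i by rewrite symE.
rewrite /B nc nc' /=.
by case: (ltrgtP (x i) (x j)) => // h; move: ne; rewrite h eqxx.
Qed.
Arguments B_total {i j}.


Let B_conn i j : connect E i j -> B i j = false.
Proof. by rewrite /B => ->. Qed.

Let B_trans i j k : B i j -> B j k -> B i k.
Proof.
move=> bij /andP[nc2 lt2]; have /andP[nc1 lt1] := bij.
apply/andP; split; last exact: lt_trans lt2.
apply/negP => cik.
have := B_l cik bij; rewrite /B => /andP[_]; rewrite ltNge => /negP; apply.
exact: ltW.
Qed.
Arguments B_trans {i j k}.


Let S := [set r | fingraph.root E r == r].

Let rootS i : fingraph.root E i \in S.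
Proof. by rewrite inE (root_root symE). Qed.

Let bi i := #|[set r in S | B r i]|.

Let bi_lt i : (bi i < #|S|)%N.
Proof.
rewrite /bi; apply: proper_card; apply/properP; split.
  by apply/fintype.subsetP => r; rewrite inE => /andP[].
exists (fingraph.root E i) => //.
rewrite inE B_conn ?andbF //; rewrite symE; exact: connect_root.
Qed.

Let bi_eq i j : connect E i j -> bi i = bi j.
Proof.
move=> cij; apply: eq_card => r; rewrite !inE.
case: (_ == r) => //=; apply/idP/idP => h; first exact: B_r cij h.
by apply: (B_r _ h); rewrite symE.
Qed.

Let bi_lt2 i j : B i j -> (bi i < bi j)%N.
Proof.
move=> bij; rewrite /bi; apply: proper_card; apply/properP; split.
  apply/fintype.subsetP => r; rewrite !inE => /andP[-> bri] /=; exact: B_trans bij.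
exists (fingraph.root E i).
  rewrite inE rootS /=; apply: B_l bij; exact: connect_root.
rewrite inE B_conn ?andbF //; rewrite symE; exact: connect_root.
Qed.

Let bi_conn i j : connect E i j <-> bi i = bi j.
Proof.
split; first exact: bi_eq.
move=> e; apply/negPn/negP => nc.
case/orP: (B_total nc) => /bi_lt2; rewrite e ltnn //.
Qed.

Lemma rank_exists : exists k (f : T -> 'I_k), RF A O f.
Proof.
exists #|S|; pose f i := Ordinal (bi_lt i); exists f.
have finj : {in S &, injective f}.
  move=> r r' rS r'S /(congr1 val) /= /bi_conn c.
  move: rS r'S; rewrite !inE => /eqP <- /eqP <-; exact/(fingraph.rootP symE).
have im : f @: S = [set: 'I_#|S|].
  apply/eqP; rewrite eqEcard finset.subsetT /= cardsT card_ord card_in_imset //.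
split.
- move=> u; have : u \in f @: S by rewrite im inE.
  by case/imsetP => r _ ->; exists r.
- move=> i j; split; first by move/bi_conn => e; apply: val_inj.
  by move/(congr1 val) => /= /bi_conn.
- move=> i j /= h y Oy.
  have nc : ~~ connect E i j.
    by apply/negP => /bi_conn e; move: h; rewrite e ltnn.
  have bij : B i j.
    case/orP: (B_total nc) => // /bi_lt2 h2.
    by move: (ltn_trans h h2); rewrite ltnn.
  have ij : i != j by apply: contraNneq nc => ->; exact: connect0.
  move: bij => /andP[_ lt].
  exact: cell_gt Oy ij (a1A hA) (c1 nc lt).
Qed.

End Exist.
Arguments rank_exists {R A} hA {T x} xc.

End MExist.
Import MExist.

Module MHelp.
Local Open Scope ring_scope.

Lemma conn_push (T1 T2 : finType) (e1 : rel T1) (e2 : rel T2) (h : T1 -> T2) :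
  (forall a b, e1 a b -> e2 (h a) (h b)) ->
  forall a b, connect e1 a b -> connect e2 (h a) (h b).
Proof.
move=> em a b /connectP [p pth ->]; elim: p a pth => [|c p IH] a /=.
  by move=> _; exact: connect0.
case/andP => eac pth; apply: connect_trans (connect1 (em _ _ eac)) _; exact: IH.
Qed.

Lemma conn_const (T : finType) (e : rel T) (U : eqType) (g : T -> U) :
  (forall a b, e a b -> g a = g b) -> forall a b, connect e a b -> g a = g b.
Proof.
move=> em a b /connectP [p pth ->]; elim: p a pth => [|c p IH] a //=.
by case/andP => eac pth; rewrite (em _ _ eac); exact: IH.
Qed.

Lemma conn_pull (T : finType) (D : {set T}) (e : rel T)
  (e' : rel {x : T | x \in D}) :
  (forall a b, e a b -> a \in D -> b \in D) ->
  (forall s s' : {x : T | x \in D}, e (val s) (val s') -> e' s s') ->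
  forall s b (hb : b \in D), connect e (val s) b -> connect e' s (exist _ b hb).
Proof.
move=> cl em s b hb /connectP [p pth eb].
elim: p s pth b hb eb => [|c p IH] s /=.
  move=> _ b hb eb; have -> : exist (fun x => x \in D) b hb = s.
    by apply: val_inj; rewrite /= eb.
  exact: connect0.
case/andP => esc pth b hb eb.
have hc : c \in D by apply: cl esc (valP s).
apply: connect_trans (connect1 (em s (exist _ c hc) esc)) _.
exact: IH.
Qed.

Section Main.
Variables (R : realType) (A : seq R).
Hypothesis hA : valid_A A.
Local Notation a1 := (head 0 A).
Variable n : nat.

Lemma restr_cell (D : {set 'I_n}) (x y : 'I_n -> R) :
  cellset A x y -> cellset A (@restr _ _ D x) (@restr _ _ D y).
Proof.
case=> yc ycell.
have vn : forall s s' : sub_idx D, s != s' -> val s != val s'.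
  by move=> s s' ss'; rewrite val_eqE.
split.
- by move=> s s' ss' a aA; apply: yc => //; exact: vn.
- by move=> s s' ss' a aA; rewrite /restr ycell //; exact: vn.
Qed.

Lemma oc_of_RF w (O : set ('I_n -> R)) (g : 'I_n -> 'I_w) (D : 'I_w -> {set 'I_n}) :
  RF A O g -> (forall u i, (i \in D u) = (g i == u)) -> ordered_components A O D.
Proof.
move=> [sg cg og] mem; split.
- split.
  + move=> u; apply/set0Pn; have [i gi] := sg u; exists i; by rewrite mem gi.
  + move=> u v uv; apply/pred0P => i /=; apply/negP => /andP[].
    rewrite !mem => /eqP -> /eqP e; by move: uv; rewrite e eqxx.
  + by move=> i; exists (g i); rewrite mem.
- move=> i j; split.
  + by move/cg => e; exists (g i); rewrite !mem e eqxx.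
  + by case=> u /andP[]; rewrite !mem => /eqP gi /eqP gj; apply/cg; rewrite gi gj.
- move=> u v i j y Oy uv; rewrite !mem => /eqP gi /eqP gj.
  by apply: og => //; rewrite gi gj.
Qed.

Lemma RF_of_oc w (O : set ('I_n -> R)) (D : 'I_w -> {set 'I_n}) :
  ordered_components A O D ->
  exists g : 'I_n -> 'I_w, RF A O g /\ forall u i, (i \in D u) = (g i == u).
Proof.
move=> [[ne dj cov] cc oo].
have cov' : forall i, exists u, i \in D u by move=> i; case: (cov i) => u h; exists u.
pose g i := xchoose (cov' i).
have gi : forall i, i \in D (g i) by move=> i; exact: xchooseP (cov' i).
have mem : forall u i, (i \in D u) = (g i == u).
  move=> u i; apply/idP/eqP => [h|<-]; last exact: gi.
  apply/eqP/negPn/negP => ne'.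
  by have := disjointFr (dj _ _ ne') (gi i); rewrite h.
exists g; split => //; split.
- move=> u; have /set0Pn [i hi] := ne u; exists i; apply/eqP; by rewrite -mem.
- move=> i j; rewrite cc; split.
  + by case=> u /andP[]; rewrite !mem => /eqP -> /eqP ->.
  + by move=> e; exists (g i); rewrite !mem e eqxx.
- move=> i j h y Oy; exact: (oo (g i) (g j) i j y Oy h (gi i) (gi j)).
Qed.

End Main.
Arguments conn_push {T1 T2 e1 e2 h} em {a b}.
Arguments conn_const {T e U g} em {a b}.
Arguments conn_pull {T D e e'} cl em s {b} hb.
Arguments restr_cell {R A n} D {x y}.
Arguments oc_of_RF {R A n w O g D}.
Arguments RF_of_oc {R A n w O D}.

End MHelp.
Import MHelp.

Module MMain.
Local Open Scope ring_scope.

Section Parts.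
Variables (R : realType) (A : seq R).
Hypothesis hA : valid_A A.
Local Notation a1 := (head 0 A).
Variables (n w : nat).

Lemma part1 :
  (forall O : set ('I_n -> R), is_region A O -> has_level O w ->
     exists D : 'I_w -> {set 'I_n},
       ordered_components A O D /\
       (forall D' : 'I_w -> {set 'I_n}, ordered_components A O D' -> D' = D) /\
       exists P : forall u : 'I_w, set (sub_idx (D u) -> R),
         phi_rel A O D P /\ forall u, has_level (P u) 1).
Proof.
move=> O /region_cellP [x0 x0c ->] hl.
have [k [f rf]] := rank_exists hA x0c.
have hk := cell_level hA x0c rf.
have ekw := has_level_uniq hk hl; subst k.
pose D := fun u => [set i | f i == u].
have memD : forall u i, (i \in D u) = (f i == u) by move=> u i; rewrite inE.
have ocD : ordered_components A (cellset A x0) D := oc_of_RF rf memD.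
exists D; split => //; split.
  move=> D' oc'; have [g [rg mem]] := RF_of_oc oc'.
  have e := RF_uniq hA (cell_refl x0c) rg rf.
  by apply/funext => u; apply/setP => i; rewrite mem memD e.
exists (fun u => cellset A (@restr _ _ (D u) x0)); split.
  split => // y Oy u; split.
  - apply/region_cellP; exists (@restr _ _ (D u) x0) => //.
    by case: (restr_cell (D u) (cell_refl x0c)).
  - exact: restr_cell.
move=> u.
have rc : arr_compl A (@restr _ _ (D u) x0).
  by case: (restr_cell (D u) (cell_refl x0c)).
case: rf => sf cf of_.
apply: (@cell_level _ _ hA _ _ _ (fun _ => ord0) rc); split.
- move=> v; rewrite (ord1 v).
  have [i fi] := sf u.
  have hi : i \in D u by rewrite memD fi.
  by exists (exist _ i hi).
- move=> s [b hb]; split => // _.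
  have c : connect (G1g A (cellset A x0)) (val s) b.
    apply: (proj2 (cf _ _)); move: (valP s) hb; rewrite !memD => /eqP -> /eqP ->; done.
  apply: (conn_pull _ _ s hb c).
  + move=> a b' e; rewrite !memD => /eqP <-; apply/eqP.
    by symmetry; apply: (proj1 (cf _ _)); exact: connect1.
  + move=> t t'; rewrite (G1_cell hA _ _ x0c) (G1_cell hA _ _ rc).
    by rewrite val_eqE.
- by move=> s s'; rewrite ltnn.
Qed.


Lemma part2 :
  (forall (O1 O2 : set ('I_n -> R)) (D : 'I_w -> {set 'I_n})
          (P : forall u : 'I_w, set (sub_idx (D u) -> R)),
     is_region A O1 -> has_level O1 w -> is_region A O2 -> has_level O2 w ->
     phi_rel A O1 D P -> phi_rel A O2 D P -> O1 = O2).
Proof.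
move=> O1 O2 D P /region_cellP [x1 x1c ->] _ /region_cellP [x2 x2c ->] _
  [oc1 ph1] [oc2 ph2].
have [g1 [r1 m1]] := RF_of_oc oc1.
have [g2 [r2 m2]] := RF_of_oc oc2.
have e : g1 = g2.
  apply/funext => i; apply/eqP; rewrite eq_sym -m2 m1 //.
subst g2.
symmetry; apply: cell_eq; split => // i j ij a aA.
have a0 := posA hA aA; have aa1 := leA hA aA.
case: r1 => _ _ o1; case: r2 => _ _ o2.
case: (ltngtP (g1 i) (g1 j)) => h.
- have h1 := o1 _ _ h _ (cell_refl x1c).
  have h2 := o2 _ _ h _ (cell_refl x2c).
  have t1 : x2 i - x2 j < a by lra.
  have t2 : x1 i - x1 j < a by lra.
  by rewrite t1 t2.
- have h1 := o1 _ _ h _ (cell_refl x1c).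
  have h2 := o2 _ _ h _ (cell_refl x2c).
  have t1 : (x2 i - x2 j < a) = false by apply/negbTE; rewrite -leNgt; lra.
  have t2 : (x1 i - x1 j < a) = false by apply/negbTE; rewrite -leNgt; lra.
  by rewrite t1 t2.
- have hi : i \in D (g1 i) by rewrite m1.
  have hj : j \in D (g1 i) by rewrite m1 (val_inj h).
  have [reg1 P1] := ph1 x1 (cell_refl x1c) (g1 i).
  have [_ P2] := ph2 x2 (cell_refl x2c) (g1 i).
  move: reg1 => /region_cellP [p pc ep].
  rewrite ep in P1 P2.
  pose si : sub_idx (D (g1 i)) := exist _ i hi.
  pose sj : sub_idx (D (g1 i)) := exist _ j hj.
  have sij : si != sj by rewrite -val_eqE.
  case: P1 => _ c1; case: P2 => _ c2.
  have := c1 si sj sij a aA; have := c2 si sj sij a aA.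
  by rewrite /restr /= => -> ->.
Qed.


Lemma part3 :
  (forall (D : 'I_w -> {set 'I_n}) (P : forall u : 'I_w, set (sub_idx (D u) -> R)),
     ordered_set_partition D ->
     (forall u, is_region A (P u) /\ has_level (P u) 1) ->
     exists O : set ('I_n -> R), [/\ is_region A O, has_level O w & phi_rel A O D P]).
Proof.
move=> D P [ne dj cov] hP.
have a10 := a1pos hA.
have hp : forall u, exists p : sub_idx (D u) -> R, arr_compl A p /\ P u = cellset A p.
  by move=> u; have [/region_cellP [p pc ->] _] := hP u; exists p.
pose p u := proj1_sig (cid (hp u)).
have pc : forall u, arr_compl A (p u) := fun u => proj1 (proj2_sig (cid (hp u))).
have Pp : forall u, P u = cellset A (p u) := fun u => proj2 (proj2_sig (cid (hp u))).
have cov' : forall i, exists u, i \in D u by move=> i; case: (cov i) => u h; exists u.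
pose bl i := xchoose (cov' i).
have hbl : forall i, i \in D (bl i) by move=> i; exact: xchooseP (cov' i).
have mem : forall u i, (i \in D u) = (bl i == u).
  move=> u i; apply/idP/eqP => [h|<-]; last exact: hbl.
  apply/eqP/negPn/negP => ne'.
  by have := disjointFr (dj _ _ ne') (hbl i); rewrite h.
pose K := \sum_(u < w) \sum_(s : sub_idx (D u)) `|p u s|.
have Kb : forall u s, `|p u s| <= K.
  move=> u s.
  apply: (@le_trans _ _ (\sum_(s0 : sub_idx (D u)) `|p u s0|)).
    by rewrite (bigD1 s) //= lerDl; apply: sumr_ge0.
  rewrite /K (bigD1 u) //= lerDl; apply: sumr_ge0 => v _; exact: sumr_ge0.
have K0 : 0 <= K by apply: sumr_ge0 => v _; exact: sumr_ge0.
pose L := 2 * K + a1 + 1.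
have L0 : 0 <= L by rewrite /L; lra.
pose x i := p (bl i) (exist _ i (hbl i)) + L * (bl i)%:R.
have pcongr : forall u1 u2 (e : u1 = u2) t (h1 : t \in D u1) (h2 : t \in D u2),
    p u1 (exist _ t h1) = p u2 (exist _ t h2).
  move=> u1 u2 e; subst u2 => t h1 h2; by rewrite (bool_irrelevance h1 h2).
have xval : forall u (s : sub_idx (D u)), x (val s) = p u s + L * u%:R.
  move=> u [t ht] /=.
  have e : bl t = u by apply/eqP; rewrite -mem.
  by rewrite /x (pcongr _ _ e t (hbl t) ht) e.
have gap : forall i j, (bl i < bl j)%N -> a1 < x j - x i.
  move=> i j h; rewrite /x.
  have := Kb (bl i) (exist _ i (hbl i)); have := Kb (bl j) (exist _ j (hbl j)).
  rewrite !ler_norml => /andP[hj1 hj2] /andP[hi1 hi2].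
  have hL : L * (bl i)%:R + L <= L * (bl j)%:R.
    have : ((bl i).+1)%:R <= (bl j)%:R :> R by rewrite ler_nat.
    rewrite -addn1 natrD => hh.
    by rewrite -[X in _ + X]mulr1 -mulrDr; apply: ler_wpM2l.
  rewrite /L in hL *; lra.
have xc : arr_compl A x.
  move=> i j ij a aA; have a0 := posA hA aA; have aa1 := leA hA aA.
  case: (ltngtP (bl i) (bl j)) => h.
  - have g := gap _ _ h; apply/eqP => e; lra.
  - have g := gap _ _ h; apply/eqP => e; lra.
  - have hj : j \in D (bl i) by rewrite mem (val_inj h).
    pose si : sub_idx (D (bl i)) := exist _ i (hbl i).
    pose sj : sub_idx (D (bl i)) := exist _ j hj.
    have e1 : x i = p (bl i) si + L * (bl i)%:R := xval _ si.
    have e2 : x j = p (bl i) sj + L * (bl i)%:R := xval _ sj.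
    rewrite e1 e2.
    have -> : p (bl i) si + L * (bl i)%:R - (p (bl i) sj + L * (bl i)%:R) =
      p (bl i) si - p (bl i) sj by ring.
    by apply: pc => //; rewrite -val_eqE.
pose O := cellset A x.
have ord : forall i j, (bl i < bl j)%N -> forall y, O y -> a1 < y j - y i.
  move=> i j h y Oy; apply: (cell_gt Oy) => //.
  - by apply/eqP => e; move: h; rewrite e ltnn.
  - exact: a1A hA.
  - exact: gap.
have rb : RF A O bl.
  split.
  - move=> u; have /set0Pn [i hi] := ne u; exists i; apply/eqP; by rewrite -mem.
  - move=> i j; split.
    + apply: conn_const => a b; rewrite (G1_cell hA a b xc) => /andP[ab h].
      move: h; rewrite ltr_norml => /andP[h1 h2].
      case: (ltngtP (bl a) (bl b)) => hh.
      * by exfalso; have := gap _ _ hh; lra.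
      * by exfalso; have := gap _ _ hh; lra.
      * exact: val_inj.
    + move=> e.
      have hi : i \in D (bl i) := hbl i.
      have hj : j \in D (bl i) by rewrite mem e.
      have [k [f' rf']] := rank_exists hA (pc (bl i)).
      have hk := cell_level hA (pc (bl i)) rf'.
      have h1 : has_level (cellset A (p (bl i))) 1 by rewrite -Pp; case: (hP (bl i)).
      have ek := has_level_uniq hk h1; subst k.
      pose si : sub_idx (D (bl i)) := exist _ i hi.
      pose sj : sub_idx (D (bl i)) := exist _ j hj.
      have cs : connect (G1g A (cellset A (p (bl i)))) si sj.
        case: rf' => _ c _; apply: (proj2 (c _ _)).
        by rewrite (ord1 (f' si)) (ord1 (f' sj)).
      have := conn_push (h := val) _ cs; apply.
      move=> s s'; rewrite (G1_cell hA _ _ (pc (bl i))) (G1_cell hA _ _ xc).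
      case/andP => ss' hs; apply/andP; split; first by rewrite val_eqE.
      rewrite (xval _ s) (xval _ s').
      have -> : p (bl i) s + L * (bl i)%:R - (p (bl i) s' + L * (bl i)%:R) =
        p (bl i) s - p (bl i) s' by ring.
      exact: hs.
  - exact: ord.
exists O; split.
- by apply/region_cellP; exists x.
- exact: (@cell_level _ _ hA _ x w bl xc rb).
- split; first exact: (oc_of_RF rb mem).
  move=> y Oy u; split; first by case: (hP u).
  rewrite Pp.
  have r1 := restr_cell (D u) Oy.
  have r2 : cellset A (p u) (@restr _ _ (D u) x).
    split; first by case: (restr_cell (D u) (cell_refl xc)).
    move=> s s' ss' a aA; rewrite /restr (xval _ s) (xval _ s').
    have -> : p u s + L * u%:R - (p u s' + L * u%:R) = p u s - p u s' by ring.
    by [].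
  by rewrite -(cell_eq r2).
Qed.

End Parts.

End MMain.
Import MMain.

Local Open Scope ring_scope.

Theorem lemma3p6 (R : realType) (A : seq R) (n w : nat)
  (hA : valid_A A) (hn : (1 <= n)%N) (hw : (1 <= w)%N) :
  (* phi_w is well defined, with values of level 1 *)
  (forall O : set ('I_n -> R), is_region A O -> has_level O w ->
     exists D : 'I_w -> {set 'I_n},
       ordered_components A O D /\
       (forall D' : 'I_w -> {set 'I_n}, ordered_components A O D' -> D' = D) /\
       exists P : forall u : 'I_w, set (sub_idx (D u) -> R),
         phi_rel A O D P /\ forall u, has_level (P u) 1) /\
  (* phi_w is injective *)
  (forall (O1 O2 : set ('I_n -> R)) (D : 'I_w -> {set 'I_n})
          (P : forall u : 'I_w, set (sub_idx (D u) -> R)),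
     is_region A O1 -> has_level O1 w -> is_region A O2 -> has_level O2 w ->
     phi_rel A O1 D P -> phi_rel A O2 D P -> O1 = O2) /\
  (* phi_w is surjective onto the disjoint union over ordered set partitions *)
  (forall (D : 'I_w -> {set 'I_n}) (P : forall u : 'I_w, set (sub_idx (D u) -> R)),
     ordered_set_partition D ->
     (forall u, is_region A (P u) /\ has_level (P u) 1) ->
     exists O : set ('I_n -> R), [/\ is_region A O, has_level O w & phi_rel A O D P]).
Proof.
split; first exact: (@part1 R A hA n w).
split; first exact: (@part2 R A hA n w).
exact: (@part3 R A hA n w).
Qed.
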